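(* In $\mathbb Z[E(\mathbb Q)]^-$ the following identities hold: $$7\,(x)\diamond(y)+(x_1)\diamond(y_1)=-2\,(-y)\diamond(1+y)+(x-y)\diamond(1-x+y),$$ $$5\,(x)\diamond(y)+(x_2)\diamond(y_2)=-\,(-y)\diamond(1+y)+(x-y)\diamond(1-x+y).$$
   Context: Let $E$ be the elliptic curve $y^2+y=x^3-x$ over $\mathbb Q$ (conductor 37), with origin the point at infinity $O$. Its Mordell–Weil group $E(\mathbb Q)$ is infinite cyclic, generated by $P=(0,0)$. On $E$, consider the rational functions $x,\ y$ and $$x_1=x-1,\quad y_1=y-2x+2,\qquad x_2=x-1,\quad y_2=-x+y+1,$$ together with $-y,\ 1+y,\ x-y,\ 1-x+y$. All of these have divisors supported on $E(\mathbb Q)$. Let $\mathbb Z[E(\mathbb Q)]^-$ be the quotient of the free abelian group $\mathbb Z[E(\mathbb Q)]$ on the symbols $[Q]$, $Q\in E(\mathbb Q)$, by the subgroup generated by all $[Q]+[-Q]$. For nonconstant functions $f,g$ on $E$ with divisors $$(f)=\sum_{n\in\mathbb Z}a_n[nP],\qquad (g)=\sum_{n\in\mathbb Z}b_n[nP],$$ define $$(f)\diamond(g)=\sum_{m,n}a_nb_m\,[(n-m)P]\in\mathbb Z[E(\mathbb Q)]^-.$$ *)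

(* Defs.v *)
From HB Require Import structures.
From mathcomp Require Import all_boot all_order all_algebra.
From mathcomp Require Import boolp classical_sets fsbigop.
Set Implicit Arguments. Unset Strict Implicit. Unset Printing Implicit Defensive.
Import Order.TTheory GRing.Theory Num.Theory.
Local Open Scope ring_scope.

(* A point of the projective plane chart: [None] is the point at infinity O,
   [Some (x, y)] the affine point (x, y). *)
Definition pt := option (rat * rat).

Definition Epts : set pt :=
  [set Q | match Q with
           | None => True
           | Some (x, y) => y ^+ 2 + y = x ^+ 3 - x
           end].

(* Group law on E(Q) (chord-tangent, origin O); for a general Weierstrass
   equation with a1 = a2 = a6 = 0, a3 = 1, a4 = -1. *)
Definition Eneg (Q : pt) : pt :=
  match Q with None => None | Some (x, y) => Some (x, - y - 1) end.

Definition Eadd (P1 P2 : pt) : pt :=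
  match P1, P2 with
  | None, _ => P2
  | _, None => P1
  | Some (x1, y1), Some (x2, y2) =>
      if (x1 == x2) && (y1 + y2 + 1 == 0) then None
      else
        let l := if x1 == x2 then (3 * x1 ^+ 2 - 1) / (2 * y1 + 1)
                 else (y2 - y1) / (x2 - x1) in
        let x3 := l ^+ 2 - x1 - x2 in
        Some (x3, - l * (x3 - x1) - y1 - 1)
  end.

Definition Esub (P1 P2 : pt) : pt := Eadd P1 (Eneg P2).

Definition P0 : pt := Some (0, 0).

(** * Regular functions on E - O: f = a(x) + b(x) y, represented by (a, b) *)
Definition fn := ({poly rat} * {poly rat})%type.

(* Order of f at O: x has a double pole and y a triple pole at O,
   so ord_O(a + b y) = - max(2 deg a, 2 deg b + 3) (f <> 0). *)
Definition ordO (f : fn) : int :=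
  - (maxn (if f.1 == 0 then 0%N else (2 * (size f.1).-1)%N)
          (if f.2 == 0 then 0%N else (2 * (size f.2).-1 + 3)%N))%:Z.

(* At an affine point Q = (x0, y0) of E with 2 y0 + 1 <> 0, t = x - x0 is a
   local parameter, and y has the power series expansion
   y = sum_k c_k t^k determined by Y^2 + Y = (x0+t)^3 - (x0+t), Y(0) = y0.
   [rhs_coef x0 k] is the t^k coefficient of (x0+t)^3 - (x0+t). *)
Definition rhs_coef (x0 : rat) (k : nat) : rat :=
  match k with
  | 0 => x0 ^+ 3 - x0
  | 1 => 3 * x0 ^+ 2 - 1
  | 2 => 3 * x0
  | 3 => 1
  | _ => 0
  end.

Fixpoint yser (x0 y0 : rat) (n : nat) : seq rat :=
  match n with
  | 0 => [:: y0]
  | m.+1 =>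
      let s := yser x0 y0 m in
      rcons s ((rhs_coef x0 m.+1 - \sum_(1 <= i < m.+1) s`_i * s`_(m.+1 - i))
               / (2 * y0 + 1))
  end.

Definition ycoef (x0 y0 : rat) (k : nat) : rat := (yser x0 y0 k)`_k.

Definition fcoef (x0 y0 : rat) (f : fn) (k : nat) : rat :=
  (f.1 \Po ('X + x0%:P))`_k
  + \sum_(0 <= i < k.+1) (f.2 \Po ('X + x0%:P))`_i * ycoef x0 y0 (k - i).

(* Order of vanishing of f at the affine point (x0, y0): the least k with a
   nonzero t^k coefficient.  (No rational point of E has 2 y0 + 1 = 0, so the
   last branch never occurs on E(Q).) *)
Definition ordA (x0 y0 : rat) (f : fn) : int :=
  if 2 * y0 + 1 == 0 then 0
  else match pselect (exists k, fcoef x0 y0 f k != 0) with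
       | left H => (ex_minn H)%:Z
       | right _ => 0
       end.

Definition divf (f : fn) (Q : pt) : int :=
  match Q with None => ordO f | Some (x0, y0) => ordA x0 y0 f end.

(* Elements of Z[E(Q)] are (finitely supported) functions E(Q) -> int,
   u = sum_Q u(Q) [Q]. *)

(* (f) <> (g) = sum_{Q,R} ord_Q(f) ord_R(g) [Q - R]  (finitely supported sums;
   with Q = nP, R = mP this is sum_{m,n} a_n b_m [(n-m)P]). *)
Definition diamond (f g : fn) : pt -> int :=
  fun S => \sum_(Q \in Epts) \sum_(R \in Epts)
             divf f Q * divf g R * ((Esub Q R == S) : int).

(* u = v in Z[E(Q)]^- : u - v lies in the subgroup generated by the
   [Q] + [-Q], i.e. u - v = sum_Q c(Q) ([Q] + [-Q]) for some finitely
   supported c. *)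
Definition eq_minus (u v : pt -> int) : Prop :=
  exists (c : pt -> int) (s : seq pt),
    (forall Q, Epts Q -> c Q != 0 -> Q \in s) /\
    (forall S, Epts S -> u S - v S = c S + c (Eneg S)).

Definition fx  : fn := ('X, 0).
Definition fy  : fn := (0, 1).
Definition fx1 : fn := ('X - 1, 0).
Definition fy1 : fn := (- 2%:P * 'X + 2%:P, 1).
Definition fx2 : fn := ('X - 1, 0).
Definition fy2 : fn := (- 'X + 1, 1).
Definition fmy : fn := (0, - 1).
Definition f1py : fn := (1, 1).
Definition fxmy : fn := ('X, - 1).
Definition f1mxpy : fn := (1 - 'X, 1).

(* Main.v *)
Require Import Defs.
From HB Require Import structures.
From mathcomp Require Import all_boot all_order all_algebra.
From mathcomp Require Import boolp classical_sets fsbigop.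
From mathcomp Require Import ring lra.
Set Implicit Arguments. Unset Strict Implicit. Unset Printing Implicit Defensive.
Import Order.TTheory GRing.Theory Num.Theory.
Local Open Scope ring_scope.

Definition lin (a b c : rat) : fn := (a%:P * 'X + b%:P, c%:P).

Lemma ycoef0 x0 y0 : ycoef x0 y0 0 = y0.
Proof. by []. Qed.

Lemma ycoef1 x0 y0 : ycoef x0 y0 1 = (3 * x0 ^+ 2 - 1) / (2 * y0 + 1).
Proof. by rewrite /ycoef /= big_geq // subr0. Qed.

Lemma ycoef2 x0 y0 : ycoef x0 y0 2 = (3 * x0 - (ycoef x0 y0 1) ^+ 2) / (2 * y0 + 1).
Proof. by rewrite /ycoef /= big_nat1 /= expr2. Qed.

Lemma fcoef_lin a b c x0 y0 k : fcoef x0 y0 (lin a b c) k =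
  (if k == 0%N then a * x0 + b else if k == 1%N then a else 0) + c * ycoef x0 y0 k.
Proof.
rewrite /fcoef /lin /= comp_polyD comp_polyM !comp_polyC comp_polyX.
rewrite big_nat_recl // big1 ?addr0; last by move=> i _; rewrite coefC /= mul0r.
rewrite coefC /= subn0 coefD coefCM coefD coefX !coefC.
case: k => [|[|k]] /=; rewrite ?mulr0 ?mulr1 ?addr0 ?add0r //.
Qed.

Lemma ordA0 x0 y0 f : fcoef x0 y0 f 0 != 0 -> ordA x0 y0 f = 0.
Proof.
move=> nz; rewrite /ordA; case: ifP => // _; case: pselect => // H.
case: ex_minnP => m _ /(_ 0%N nz); by rewrite leqn0 => /eqP ->.
Qed.

Lemma ordAk x0 y0 f k : 2 * y0 + 1 != 0 ->
  (forall i, (i < k)%N -> fcoef x0 y0 f i = 0) -> fcoef x0 y0 f k != 0 ->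
  ordA x0 y0 f = k%:Z.
Proof.
move=> hy hlt hk; rewrite /ordA (negbTE hy); case: pselect => [H|H]; last first.
  by exfalso; apply: H; exists k.
case: ex_minnP => m hm /(_ k hk) hmk; congr Posz; apply/eqP; rewrite eqn_leq hmk /=.
by rewrite leqNgt; apply/negP => /hlt; move/eqP: hm.
Qed.

Lemma ordO_lin a b c : ordO (lin a b c) =
  - (maxn (if (a == 0) && (b == 0) then 0%N else (2 * (a != 0%R))%N)
          (if c == 0 then 0%N else 3%N))%:Z.
Proof.
rewrite /ordO /lin /=.
have hs := size_MXaddC a%:P b.
rewrite polyC_eq0 size_polyC in hs.
rewrite -size_poly_eq0 hs polyC_eq0 size_polyC.
case: (a == 0); case: (b == 0); case: (c == 0) => //.
Qed.


Definition eval (l : seq (pt * int)) (S : pt) : int :=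
  foldr (fun p acc => p.2 * ((p.1 == S) : int) + acc) 0 l.
Definition keys (l : seq (pt * int)) : seq pt := map fst l.

Lemma evalE l S : eval l S = \sum_(p <- l) p.2 * ((p.1 == S) : int).
Proof. by elim: l => [|p l IH]; rewrite ?big_nil ?big_cons //= IH. Qed.

Lemma eval_notin l S : S \notin keys l -> eval l S = 0.
Proof.
elim: l => [|[k v] l IH] //=; rewrite inE negb_or => /andP[hk hl].
by rewrite IH // eq_sym (negbTE hk) mulr0 addr0.
Qed.

Lemma eval_cat l1 l2 S : eval (l1 ++ l2) S = eval l1 S + eval l2 S.
Proof. by elim: l1 => [|p l IH] /=; rewrite ?add0r // IH addrA. Qed.

Definition scale (k : int) (l : seq (pt * int)) := [seq (p.1, k * p.2) | p <- l].
Lemma eval_scale k l S : eval (scale k l) S = k * eval l S.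
Proof. by elim: l => [|p l IH] /=; rewrite ?mulr0 // IH mulrDr mulrA. Qed.

Definition onE (Q : pt) : bool :=
  match Q with None => true | Some (x, y) => y ^+ 2 + y == x ^+ 3 - x end.
Lemma onEP Q : onE Q -> Epts Q.
Proof. by case: Q => [[x y]|] //= /eqP. Qed.

Lemma sum_keys l (G : pt -> int) : uniq (keys l) ->
  \sum_(Q <- keys l) eval l Q * G Q = \sum_(p <- l) p.2 * G p.1.
Proof.
elim: l => [|[k v] l IH] /=; first by rewrite !big_nil.
move=> /andP[hk hu]; rewrite !big_cons /= eqxx (eval_notin hk) addr0 mulr1 -IH //.
congr (_ + _); rewrite big_seq [RHS]big_seq; apply: eq_bigr => Q hQ.
have -> : (k == Q) = false by apply/eqP => ekQ; rewrite ekQ hQ in hk.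
by rewrite mulr0 add0r.
Qed.

Lemma fsum_keys (A : set pt) l (G : pt -> int) : uniq (keys l) ->
  all onE (keys l) -> (forall Q, Epts Q -> Epts Q) ->
  (A = Epts) ->
  \sum_(Q \in A) eval l Q * G Q = \sum_(Q <- keys l) eval l Q * G Q.
Proof.
move=> hu hE _ ->; rewrite (fsbigE (keys l)) //.
- rewrite big_seq_cond [RHS]big_seq; apply: eq_bigl => Q.
  case hQ: (Q \in keys l) => //=; apply/mem_set/onEP; exact: (allP hE).
- by move=> Q /= hQ; apply/onEP; exact: (allP hE).
- by move=> Q _ hQ; rewrite eval_notin // mul0r.
Qed.

Definition dlist (lf lg : seq (pt * int)) : seq (pt * int) :=
  flatten [seq [seq (Esub p.1 q.1, p.2 * q.2) | q <- lg] | p <- lf].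

Lemma diamond_eval f g lf lg :
  (forall Q, Epts Q -> divf f Q = eval lf Q) ->
  (forall Q, Epts Q -> divf g Q = eval lg Q) ->
  uniq (keys lf) -> uniq (keys lg) -> all onE (keys lf) -> all onE (keys lg) ->
  forall S, diamond f g S = eval (dlist lf lg) S.
Proof.
move=> hf hg uf ug ef eg S; rewrite /diamond.
rewrite (eq_fsbigr (fun Q => eval lf Q *
   \sum_(R \in Epts) eval lg R * ((Esub Q R == S) : int))); last first.
  move=> Q /set_mem hQ; rewrite hf // mulr_fsumr; apply: eq_fsbigr => R /set_mem hR.
  by rewrite hg // mulrA.
rewrite fsum_keys // sum_keys //.
rewrite /dlist; elim: lf {hf uf ef} => [|p lf IH] /=; first by rewrite big_nil.
rewrite big_cons eval_cat IH; congr (_ + _); clear IH.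
rewrite fsum_keys // sum_keys // big_distrr /=.
elim: lg {hg ug eg} => [|q lg IH2] /=; first by rewrite big_nil.
by rewrite big_cons IH2 mulrA.
Qed.

Lemma EnegK Q : Eneg (Eneg Q) = Q.
Proof. case: Q => [[x y]|] //=; congr (Some (_, _)); ring. Qed.

Definition half (n : int) : int := (n %/ 2)%Z.
Definition posp (T : pt) : bool :=
  match T with None => false | Some (x, y) => 0 < 2 * y + 1 end.
Definition cfun (L : seq (pt * int)) : seq (pt * int) :=
  [seq (T, if T == None then half (eval L T) else if posp T then eval L T else 0)
  | T <- undup (keys L)].
Definition checkL (L : seq (pt * int)) : bool :=
  let C := cfun L in
  all (fun T => eval L T == eval C T + eval C (Eneg T))
      (keys L ++ keys C ++ map Eneg (keys C)).

Lemma eq_minus_eval (U V : pt -> int) L :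
  (forall S, Epts S -> U S - V S = eval L S) -> checkL L -> eq_minus U V.
Proof.
move=> hUV hc; exists (eval (cfun L)), (keys (cfun L)); split.
  by move=> Q _; apply: contraR => /eval_notin ->.
move=> S hS; rewrite hUV //.
case hin: (S \in keys L ++ keys (cfun L) ++ map Eneg (keys (cfun L))).
  by apply/eqP; exact: (allP hc).
move: hin; rewrite !mem_cat => /negbT; rewrite !negb_or => /and3P[h1 h2 h3].
rewrite !eval_notin // ?addr0 //.
apply: contra h3 => h; rewrite -[S]EnegK; exact: map_f.
Qed.


Definition zerop (a b c : rat) (p : pt * int) : bool :=
  match p.1 with None => true | Some (x0, y0) => a * x0 + b + c * y0 == 0 end.

Lemma divf_lin a b c lf :
  ordO (lin a b c) = eval lf None ->
  (forall x0 y0, y0 ^+ 2 + y0 = x0 ^+ 3 - x0 -> a * x0 + b + c * y0 = 0 ->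
     Some (x0, y0) \in keys lf) ->
  all (zerop a b c) lf ->
  (forall x0 y0, Some (x0, y0) \in keys lf ->
     ordA x0 y0 (lin a b c) = eval lf (Some (x0, y0))) ->
  forall Q, Epts Q -> divf (lin a b c) Q = eval lf Q.
Proof.
move=> hO hz hall hk [[x0 y0]|] //= hE.
have [h0|hn0] := eqVneq (a * x0 + b + c * y0) 0.
  by apply: hk; apply: hz.
rewrite ordA0; last by rewrite fcoef_lin ycoef0.
rewrite eval_notin //; apply/negP => /mapP[[k v] hkv /= ek].
by move: (allP hall _ hkv); rewrite /zerop /= -ek (negbTE hn0).
Qed.

Definition P1 : pt := Some (0, 0).
Definition N1 : pt := Some (0, -1).
Definition P2 : pt := Some (1, 0).
Definition N2 : pt := Some (1, -1).
Definition P3 : pt := Some (-1, -1).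
Definition N3 : pt := Some (-1, 0).
Definition N4 : pt := Some (2, 2).

Definition lx  : seq (pt * int) := [:: (P1, 1); (N1, 1); (None, -2)].
Definition ly  : seq (pt * int) := [:: (P1, 1); (P2, 1); (N3, 1); (None, -3)].
Definition lx1 : seq (pt * int) := [:: (P2, 1); (N2, 1); (None, -2)].
Definition ly1 : seq (pt * int) := [:: (P2, 2); (N4, 1); (None, -3)].
Definition ly2 : seq (pt * int) := [:: (N1, 2); (P2, 1); (None, -3)].
Definition l1py : seq (pt * int) := [:: (N1, 1); (N2, 1); (P3, 1); (None, -3)].
Definition lxmy : seq (pt * int) := [:: (P1, 1); (N4, 1); (P3, 1); (None, -3)].

Ltac ord1 := apply: (@ordAk _ _ _ 1%N); [by vm_compute
  | by case=> // _; rewrite fcoef_lin ycoef0; apply/eqP; vm_compute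
  | by rewrite fcoef_lin ycoef1; vm_compute].
Ltac ord2 := apply: (@ordAk _ _ _ 2%N); [by vm_compute
  | by case=> [|[|]] // _; rewrite fcoef_lin ?ycoef0 ?ycoef1; apply/eqP; vm_compute
  | by rewrite fcoef_lin ycoef2 ycoef1; vm_compute].

Lemma div_x Q : Epts Q -> divf (lin 1 0 0) Q = eval lx Q.
Proof.
apply: divf_lin.
- by rewrite ordO_lin; vm_compute.
- move=> x y H L.
  have ex : x = 0 by lra.
  subst x.
  have h : y * (y + 1) = 0.
    transitivity ((y ^+ 2 + y) - (0 ^+ 3 - 0)); first by ring.
    by rewrite H subrr.
  move/eqP: h; rewrite mulf_eq0 addr_eq0 => /orP[/eqP->|/eqP->]; by vm_compute.
- by vm_compute.
- move=> x y; rewrite !inE => /orP[/eqP[->->]|/orP[/eqP[->->]|//]]; ord1.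
Qed.

Ltac roots h := move/eqP: h; rewrite !mulf_eq0 !subr_eq0 => h;
  (repeat (case/orP: h => h)); move/eqP: h => ->; by vm_compute.

Lemma div_y Q : Epts Q -> divf (lin 0 0 1) Q = eval ly Q.
Proof.
apply: divf_lin.
- by rewrite ordO_lin; vm_compute.
- move=> x y H L.
  have ey : y = 0 by lra.
  subst y.
  have h : (x - 0) * (x - 1) * (x - (-1)) = 0.
    transitivity ((x ^+ 3 - x) - (0 ^+ 2 + 0)); first by ring.
    by rewrite H subrr.
  roots h.
- by vm_compute.
- move=> x y; rewrite !inE => /orP[/eqP[->->]|/orP[/eqP[->->]|/orP[/eqP[->->]|//]]]; ord1.
Qed.

Lemma div_my Q : Epts Q -> divf (lin 0 0 (-1)) Q = eval ly Q.
Proof.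
apply: divf_lin.
- by rewrite ordO_lin; vm_compute.
- move=> x y H L.
  have ey : y = 0 by lra.
  subst y.
  have h : (x - 0) * (x - 1) * (x - (-1)) = 0.
    transitivity ((x ^+ 3 - x) - (0 ^+ 2 + 0)); first by ring.
    by rewrite H subrr.
  roots h.
- by vm_compute.
- move=> x y; rewrite !inE => /orP[/eqP[->->]|/orP[/eqP[->->]|/orP[/eqP[->->]|//]]]; ord1.
Qed.

Lemma div_x1 Q : Epts Q -> divf (lin 1 (-1) 0) Q = eval lx1 Q.
Proof.
apply: divf_lin.
- by rewrite ordO_lin; vm_compute.
- move=> x y H L.
  have ex : x = 1 by lra.
  subst x.
  have h : (y - 0) * (y - (-1)) = 0.
    transitivity ((y ^+ 2 + y) - (1 ^+ 3 - 1)); first by ring.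
    by rewrite H subrr.
  roots h.
- by vm_compute.
- move=> x y; rewrite !inE => /orP[/eqP[->->]|/orP[/eqP[->->]|//]]; ord1.
Qed.

Lemma div_y1 Q : Epts Q -> divf (lin (-2) 2 1) Q = eval ly1 Q.
Proof.
apply: divf_lin.
- by rewrite ordO_lin; vm_compute.
- move=> x y H L.
  have ey : y = 2 * x - 2 by lra.
  subst y.
  have h : (x - 1) * (x - 1) * (x - 2) = 0.
    transitivity ((x ^+ 3 - x) - ((2 * x - 2) ^+ 2 + (2 * x - 2))); first by ring.
    by rewrite H subrr.
  roots h.
- by vm_compute.
- move=> x y; rewrite !inE => /orP[/eqP[->->]|/orP[/eqP[->->]|//]]; [ord2|ord1].
Qed.

Lemma div_y2 Q : Epts Q -> divf (lin (-1) 1 1) Q = eval ly2 Q.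
Proof.
apply: divf_lin.
- by rewrite ordO_lin; vm_compute.
- move=> x y H L.
  have ey : y = x - 1 by lra.
  subst y.
  have h : (x - 0) * (x - 0) * (x - 1) = 0.
    transitivity ((x ^+ 3 - x) - ((x - 1) ^+ 2 + (x - 1))); first by ring.
    by rewrite H subrr.
  roots h.
- by vm_compute.
- move=> x y; rewrite !inE => /orP[/eqP[->->]|/orP[/eqP[->->]|//]]; [ord2|ord1].
Qed.

Lemma div_1py Q : Epts Q -> divf (lin 0 1 1) Q = eval l1py Q.
Proof.
apply: divf_lin.
- by rewrite ordO_lin; vm_compute.
- move=> x y H L.
  have ey : y = -1 by lra.
  subst y.
  have h : (x - 0) * (x - 1) * (x - (-1)) = 0.
    transitivity ((x ^+ 3 - x) - ((-1) ^+ 2 + (-1))); first by ring.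
    by rewrite H subrr.
  roots h.
- by vm_compute.
- move=> x y; rewrite !inE => /orP[/eqP[->->]|/orP[/eqP[->->]|/orP[/eqP[->->]|//]]]; ord1.
Qed.

Lemma div_xmy Q : Epts Q -> divf (lin 1 0 (-1)) Q = eval lxmy Q.
Proof.
apply: divf_lin.
- by rewrite ordO_lin; vm_compute.
- move=> x y H L.
  have ey : y = x by lra.
  subst y.
  have h : (x - 0) * (x - 2) * (x - (-1)) = 0.
    transitivity ((x ^+ 3 - x) - (x ^+ 2 + x)); first by ring.
    by rewrite H subrr.
  roots h.
- by vm_compute.
- move=> x y; rewrite !inE => /orP[/eqP[->->]|/orP[/eqP[->->]|/orP[/eqP[->->]|//]]]; ord1.
Qed.


Lemma fxE : fx = lin 1 0 0.
Proof. by rewrite /fx /lin polyC1 mul1r polyC0 addr0. Qed.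
Lemma fyE : fy = lin 0 0 1.
Proof. by rewrite /fy /lin polyC0 mul0r addr0 polyC1. Qed.
Lemma fx1E : fx1 = lin 1 (-1) 0.
Proof. by rewrite /fx1 /lin polyC1 mul1r polyC0 polyCN polyC1. Qed.
Lemma fx2E : fx2 = lin 1 (-1) 0.
Proof. by rewrite /fx2 /lin polyC1 mul1r polyC0 polyCN polyC1. Qed.
Lemma fy1E : fy1 = lin (-2) 2 1.
Proof. by rewrite /fy1 /lin polyCN polyC1. Qed.
Lemma fy2E : fy2 = lin (-1) 1 1.
Proof. by rewrite /fy2 /lin !polyCN polyC1 mulN1r. Qed.
Lemma fmyE : fmy = lin 0 0 (-1).
Proof. by rewrite /fmy /lin polyC0 mul0r addr0 polyCN polyC1. Qed.
Lemma f1pyE : f1py = lin 0 1 1.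
Proof. by rewrite /f1py /lin polyC0 mul0r add0r polyC1. Qed.
Lemma fxmyE : fxmy = lin 1 0 (-1).
Proof. by rewrite /fxmy /lin polyC1 mul1r polyC0 addr0 polyCN polyC1. Qed.
Lemma f1mxpyE : f1mxpy = lin (-1) 1 1.
Proof. by rewrite /f1mxpy /lin polyCN polyC1 mulN1r addrC. Qed.

Lemma eval_cat4 A B C D S : eval (A ++ B ++ C ++ D) S =
  eval A S + eval B S + eval C S + eval D S.
Proof. by rewrite !eval_cat !addrA. Qed.

Ltac dia := apply: diamond_eval; [ first [exact: div_x | exact: div_y | exact: div_my
  | exact: div_x1 | exact: div_y1 | exact: div_y2 | exact: div_1py | exact: div_xmy]
  | first [exact: div_x | exact: div_y | exact: div_my
  | exact: div_x1 | exact: div_y1 | exact: div_y2 | exact: div_1py | exact: div_xmy]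
  | by vm_compute | by vm_compute | by vm_compute | by vm_compute ].

Theorem mainTheorem2 :
  eq_minus (fun S => 7 * diamond fx fy S + diamond fx1 fy1 S)
           (fun S => - 2 * diamond fmy f1py S + diamond fxmy f1mxpy S)
  /\
  eq_minus (fun S => 5 * diamond fx fy S + diamond fx2 fy2 S)
           (fun S => - diamond fmy f1py S + diamond fxmy f1mxpy S).
Proof.
rewrite fxE fyE fx1E fx2E fy1E fy2E fmyE f1pyE fxmyE f1mxpyE.
split.
- apply: (@eq_minus_eval _ _ (scale 7 (dlist lx ly) ++ dlist lx1 ly1 ++
     scale 2 (dlist ly l1py) ++ scale (-1) (dlist lxmy ly2))); last by vm_compute.
  move=> S _.
  rewrite eval_cat4 !eval_scale.
  have -> : diamond (lin 1 0 0) (lin 0 0 1) S = eval (dlist lx ly) S by dia.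
  have -> : diamond (lin 1 (-1) 0) (lin (-2) 2 1) S = eval (dlist lx1 ly1) S by dia.
  have -> : diamond (lin 0 0 (-1)) (lin 0 1 1) S = eval (dlist ly l1py) S by dia.
  have -> : diamond (lin 1 0 (-1)) (lin (-1) 1 1) S = eval (dlist lxmy ly2) S by dia.
  ring.
- apply: (@eq_minus_eval _ _ (scale 5 (dlist lx ly) ++ dlist lx1 ly2 ++
     scale 1 (dlist ly l1py) ++ scale (-1) (dlist lxmy ly2))); last first.
    by vm_compute.
  move=> S _.
  rewrite eval_cat4 !eval_scale.
  have -> : diamond (lin 1 0 0) (lin 0 0 1) S = eval (dlist lx ly) S by dia.
  have -> : diamond (lin 1 (-1) 0) (lin (-1) 1 1) S = eval (dlist lx1 ly2) S by dia.
  have -> : diamond (lin 0 0 (-1)) (lin 0 1 1) S = eval (dlist ly l1py) S by dia.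
  have -> : diamond (lin 1 0 (-1)) (lin (-1) 1 1) S = eval (dlist lxmy ly2) S by dia.
  ring.
Qed.
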